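(* Let $G$ be a group of nilpotency class two, minimally generated by elements $x_1,\ldots,x_m$ of orders $1<2^{r_1}\leq 2^{r_2}\leq\cdots\leq 2^{r_m}$, respectively, and assume that $m>1$ and $r_m=r_{m-1}+1$. If $G$ is capable, then for some $i\in\{1,\ldots,m-1\}$ the commutator $[x_m,x_i]$ has order exactly $2^{r_{m-1}}$.
   Context: A group $G$ is called capable if there exists a group $K$ such that $K/Z(K)\cong G$. Commutators are $[x,y]=x^{-1}y^{-1}xy$. *)

(* Defs.v *)
From HB Require Import structures.
From mathcomp Require Import all_boot all_fingroup all_solvable.
Set Implicit Arguments. Unset Strict Implicit. Unset Printing Implicit Defensive.
Import GroupScope.

(* A (finite) group G is capable if there is a group K (arbitrary, possibly
   infinite, given by carrier and operations) with K / Z(K) isomorphic to G.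
   We express the isomorphism K/Z(K) ~= G as a surjective homomorphism
   f : K -> G whose kernel is exactly the center Z(K). *)
Definition capable (gT : finGroupType) (G : {set gT}) : Prop :=
  exists (T : Type) (mul : T -> T -> T) (one : T) (inv : T -> T) (f : T -> gT),
    (forall a b c, mul a (mul b c) = mul (mul a b) c) /\
    (forall a, mul one a = a) /\
    (forall a, mul (inv a) a = one) /\
    (forall a b, f (mul a b) = f a * f b) /\
    (forall a, f a \in G) /\
    (forall g, g \in G -> exists a, f a = g) /\
    (forall a, f a = 1 <-> (forall b, mul a b = mul b a)).

(* Main.v *)
Require Import Defs.
From HB Require Import structures.
From mathcomp Require Import all_boot all_fingroup all_solvable.
From mathcomp Require boolp.
Import GroupScope.

Record grp := Grp {
  gcar : Type; gmul : gcar -> gcar -> gcar; gone : gcar; ginv : gcar -> gcar;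
  gA : forall a b c, gmul a (gmul b c) = gmul (gmul a b) c;
  g1 : forall a, gmul gone a = a;
  gV : forall a, gmul (ginv a) a = gone }.

Definition carW (K : grp) : Type := gcar K.
HB.instance Definition _ (K : grp) := boolp.gen_eqMixin (carW K).
HB.instance Definition _ (K : grp) := boolp.gen_choiceMixin (carW K).

Lemma gV' (K : grp) (a : gcar K) : gmul K a (ginv K a) = gone K.
Proof.
rewrite -[LHS]g1 -(gV K (ginv K a)) -gA (gA _ (ginv K a) a) gV g1 gV //.
Qed.

Lemma g1' (K : grp) (a : gcar K) : gmul K a (gone K) = a.
Proof. by rewrite -(gV K a) gA gV' g1. Qed.

HB.instance Definition _ (K : grp) :=
  isGroup.Build (carW K) (@gA K) (@g1 K) (@g1' K) (@gV K) (@gV' K).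

Set Implicit Arguments. Unset Strict Implicit. Unset Printing Implicit Defensive.

Definition centH (H : groupType) (a : H) := forall b : H, commute a b.

Lemma commMgJ' (H : groupType) (x y z : H) : [~ x * y, z] = [~ x, z] ^ y * [~ y, z].
Proof. by rewrite !commgEr conjgM mulgA -conjMg mulgK. Qed.

Lemma commXg' (H : groupType) (x y : H) i :
  commute x [~ x, y] -> [~ x ^+ i, y] = [~ x, y] ^+ i.
Proof.
move=> cxz; elim: i => [|i' IHi]; first exact: comm1g.
by rewrite !expgS commMgJ' /conjg commuteX // mulKg IHi.
Qed.

Lemma conj_cent (H : groupType) (a c : H) : commute a c -> a ^ c = a.
Proof. by move=> ac; rewrite conjgE ac mulKg. Qed.

Lemma conj_comm (H : groupType) (a c : H) : a ^ c = a * [~ a, c].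
Proof. by rewrite commgEl mulKVg. Qed.

Lemma cent_mid (H : groupType) (a b c : H) : centH c -> a * c * b = a * b * c.
Proof. by move=> cc; rewrite -!mulgA (cc b). Qed.

Lemma conj_pow (H : groupType) (y b d g : H) :
  y ^ b = y * d -> d ^ b = d * g -> centH g ->
  forall k, y ^ (b ^+ k) = y * d ^+ k * g ^+ 'C(k, 2).
Proof.
move=> yb db cg; elim=> [|k IH]; first by rewrite expg0 conjg1 !expg0 !mulg1.
rewrite expgSr conjgM IH !conjMg !conjXg yb db (conj_cent (cg b)).
rewrite expgMn; last exact: commute_sym (cg _).
rewrite binS bin1 expgD.
by rewrite expgS -[in RHS]expgD addnC expgD !mulgA.
Qed.

Lemma pow_mul (H : groupType) (y d e : H) :
  [~ d, y] = e -> centH e ->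
  forall k, (y * d) ^+ k = y ^+ k * d ^+ k * e ^+ 'C(k, 2).
Proof.
move=> de ce; elim=> [|k IH]; first by rewrite !expg0 !mulg1.
have cde : commute d [~ d, y] by rewrite de; exact: commute_sym (ce _).
rewrite expgSr IH binS bin1 expgD.
have E: d ^+ k * y = y * d ^+ k * e ^+ k by rewrite [LHS]commgC commXg' // de.
have cX : forall n, centH (e ^+ n) by move=> n c; apply: commute_sym; apply: commuteX; apply: commute_sym; exact: ce.
rewrite cent_mid // !mulgA -(mulgA (y ^+ k)) E !mulgA (cent_mid _ _ (cX k)).
by rewrite !expgSr !mulgA -[RHS]mulgA -expgD addnC expgD !mulgA.
Qed.

Lemma bin2_double h : 'C(h.*2, 2) = (h * (h.*2).-1)%N.
Proof. by rewrite bin2 -mul2n -mulnA mul2n doubleK. Qed.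

Lemma key (H : groupType) (y b : H) (h : nat) :
  centH (b ^+ h.*2) -> centH ([~ y, b] ^+ h) ->
  (forall c, centH [~ [~ y, b], c]) -> commute (y ^+ h.*2) b.
Proof.
move=> cbn cdh cdc.
set d := [~ y, b]; set e := [~ d, y]; set g := [~ d, b].
have eh : e ^+ h = 1.
  rewrite /e -commXg'; last exact: commute_sym (cdc y d).
  by apply/eqP/commgP; exact: cdh.
have gh : g ^+ h = 1.
  rewrite /g -commXg'; last exact: commute_sym (cdc b d).
  by apply/eqP/commgP; exact: cdh.
have CP := conj_pow (conj_comm y b) (conj_comm d b) (cdc b) h.*2.
rewrite (conj_cent (commute_sym (cbn y))) bin2_double expgM gh expg1n mulg1 in CP.
have dn : d ^+ h.*2 = 1.
  by apply: (mulgI y); rewrite -CP mulg1.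
have PM := pow_mul (erefl e) (cdc y) h.*2.
apply/commgP/conjg_fixP.
by rewrite conjXg conj_comm -/d PM dn bin2_double expgM eh expg1n !mulg1.
Qed.

Theorem theorem2p3 (gT : finGroupType) (G : {group gT}) (m : nat)
    (x : nat -> gT) (r : nat -> nat) :
  nilpotent G -> nil_class G = 2 ->
  1 < m ->
  G :=: <<[set x (val i) | i : 'I_m]>> ->
  (forall j, j < m -> <<[set x (val i) | i : 'I_m & val i != j]>> != G) ->
  (forall i, i < m -> #[x i] = (2 ^ r i)%N) ->
  0 < r 0 ->
  (forall i j, i <= j -> j < m -> r i <= r j) ->
  r m.-1 = (r m.-2).+1 ->
  capable G ->
  exists i, i < m.-1 /\ #[[~ x m.-1, x i]] = (2 ^ r m.-2)%N.
Proof.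
move=> _ cl2 m1 Ggen _ ord r0 mono rlast cap.
have xG : forall i, i < m -> x i \in G.
  by move=> i lt; rewrite Ggen; apply: mem_gen; apply/imsetP; exists (Ordinal lt).
have m2m : m.-2 < m by move: m1; clear; case: m => [|[|k]].
have m1m : m.-1 < m by move: m1; clear; case: m => [|[|k]].
have rpos : 0 < r m.-2 by apply: leq_trans r0 (mono _ _ _ m2m).
set r' := r m.-2 in rpos *.
set h := (2 ^ r'.-1)%N.
have nh : (2 ^ r')%N = h.*2 by rewrite /h -mul2n -expnS prednK.
case: (boolP [exists i : 'I_m.-1, #[[~ x m.-1, x i]] == (2 ^ r')%N]).
  by case/existsP=> i /eqP E; exists i; split.
move/existsPn=> noi; exfalso.
case: cap => T [mul [one [inv [f [mA [m1g [mVg [fM0 [fG [fS fK]]]]]]]]]].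
pose K := @Grp T mul one inv mA m1g mVg.
have fM : forall a b : carW K, f (a * b) = f a * f b by exact: fM0.
have kerP : forall a : carW K, f a = 1 <-> centH a by exact: fK.
have f1 : f (1 : carW K) = 1.
  by apply: (mulgI (f (1 : carW K))); rewrite -fM !mulg1.
have fV : forall a : carW K, f a^-1 = (f a)^-1.
  by move=> a; apply: (mulgI (f a)); rewrite -fM !mulgV f1.
have fX : forall (a : carW K) k, f (a ^+ k) = f a ^+ k.
  by move=> a; elim=> [|k IH]; rewrite ?f1 // !expgS fM IH.
have fR : forall a b : carW K, f [~ a, b] = [~ f a, f b].
  by move=> a b; rewrite /commg /conjg !fM !fV.
have der : G^`(1) \subset 'Z(G) by rewrite -nil_class2 cl2.
have ZG : forall i, i < m -> [~ x m.-1, x i] \in 'Z(G).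
  by move=> i im; apply: (subsetP der); rewrite derg1 mem_commg // xG.
have cZ : forall z g, z \in 'Z(G) -> g \in G -> [~ z, g] = 1.
  by move=> z g /centerP [_ cz] gG; apply/eqP/commgP; exact: cz g gG.
have [y fy] : exists y : carW K, f y = x m.-1 := fS _ (xG _ m1m).
have mm : m.-1 = (m.-2).+1 by move: m1; clear; case: m => [|[|k]].
have keyi : forall i, i < m.-1 -> forall b : carW K, f b = x i -> commute (y ^+ h.*2) b.
  move=> i im b fb.
  have iM : i < m by apply: ltn_trans im m1m.
  have ir : r i <= r' by apply: mono _ _ _ m2m; rewrite -ltnS -mm.
  have xin : x i ^+ (2 ^ r')%N = 1.
    by apply/eqP; rewrite -order_dvdn ord // dvdn_exp2l.
  apply: key.
  - by apply/kerP; rewrite fX fb -nh.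
  - apply/kerP; rewrite fX fR fy fb.
    set c := [~ x m.-1, x i].
    have cn : c ^+ (2 ^ r')%N = 1.
      rewrite /c -commgX ?xin ?commg1 //.
      by apply: commute_sym; have /centerP [_ cz] := ZG i iM; exact: cz _ (xG _ iM).
    move/eqP: cn; rewrite -order_dvdn => /dvdn_pfactor-/(_ (isT : prime 2)) [k kle ck].
    have kne : k != r'.
      by apply: contra (noi (Ordinal im)) => /eqP kr; rewrite /c ck kr.
    apply/eqP; rewrite -order_dvdn ck /h dvdn_exp2l //.
    by rewrite -ltnS prednK // ltn_neqAle kne kle.
  - by move=> c; apply/kerP; rewrite !fR fy fb; apply: cZ (ZG _ iM) (fG c).
set yn := y ^+ h.*2.
have ycent : forall k : carW K, centH k -> commute yn k.
  by move=> k ck; apply: commute_sym; exact: ck.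
pose P g := forall k : carW K, f k = g -> commute yn k.
pose A := [set g in G | boolp.asbool (P g)].
have gA : group_set A.
  apply/group_setP; split.
    rewrite inE group1 /=; apply/boolp.asboolP => k /kerP; exact: ycent.
  move=> g1 g2; rewrite !inE => /andP [g1G /boolp.asboolP P1] /andP [g2G /boolp.asboolP P2].
  rewrite groupM //=; apply/boolp.asboolP => k fk.
  have [k1 fk1] : exists k1 : carW K, f k1 = g1 := fS _ g1G.
  have -> : k = k1 * (k1^-1 * k) by rewrite mulKVg.
  apply: commuteM; first exact: P1.
  by apply: P2; rewrite fM fV fk fk1 mulKg.
have GA : G \subset Group gA.
  rewrite {1}Ggen gen_subG; apply/subsetP => _ /imsetP [i _ ->].
  rewrite inE xG //=; apply/boolp.asboolP => k fk.
  have [ilt | ige] := ltnP i m.-1.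
    exact: keyi ilt k fk.
  have ie : val i = m.-1 by apply/eqP; rewrite eqn_leq ige andbT -ltnS prednK ?ltn_ord // ltnW.
  have -> : k = y * (y^-1 * k) by rewrite mulKVg.
  apply: commuteM; first exact: commute_sym (commuteX _ (commute_refl y)).
  by apply: ycent; apply/kerP; rewrite fM fV fk fy ie mulVg.
have cyn : centH yn.
  move=> k; have : f k \in A by apply: (subsetP GA); exact: fG.
  by rewrite inE => /andP [_ /boolp.asboolP]; apply.
move/kerP: cyn; rewrite fX fy -nh => /eqP; rewrite -order_dvdn ord // rlast.
by rewrite dvdn_Pexp2l // ltnn.
Qed.
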